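(* Let $r\ge2$ and $\ell\ge r-1$. Then every semi-valid tuple of length $2\ell+1$ in $\Omega_n$ is $r$-valid.
   Context: $\Omega_n=\{v_0,\dots,v_{n-1}\}$ with cyclic order $v_0<\dots<v_{n-1}<v_0$. For distinct vertices $u,w$, $[u,w]$ is the set consisting of $u$, $w$ and all vertices met when moving clockwise from $u$ to $w$. A tuple $C=(w_1,\dots,w_{2\ell+1})$ of distinct vertices is semi-valid if $w_1<w_3<\dots<w_{2\ell+1}<w_2<w_4<\dots<w_{2\ell}<w_1$ in clockwise cyclic order, and $r$-valid if moreover $|[w_i,w_{i-1}]|\ge r$ for all $i$ (indices mod $2\ell+1$). *)

(* Defs.v *)
From mathcomp Require Import all_boot.
Set Implicit Arguments. Unset Strict Implicit. Unset Printing Implicit Defensive.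

(* Omega_n = 'I_n, with cyclic (clockwise) order v_0 < v_1 < ... < v_{n-1} < v_0. *)

Definition cdist (n : nat) (u v : 'I_n) : nat := (v + n - u) %% n.

(* the sequence s lists distinct vertices in clockwise cyclic order,
   i.e. walking clockwise from the first element one meets them in order *)
Definition cyc_ordered (n : nat) (s : seq 'I_n) : bool :=
  match s with
  | [::] => true
  | x :: _ => uniq s && sorted ltn [seq cdist x y | y <- s]
  end.

Definition cint (n : nat) (u w : 'I_n) : {set 'I_n} :=
  [set v | cdist u v <= cdist u w].

(* A tuple C = (w_1, ..., w_{2l+1}) is a function w : 'I_(2l+1) -> 'I_n,
   with w_{k+1} = w k (0-based indices). *)
Definition semi_valid (n l : nat) (w : 'I_(l.*2.+1) -> 'I_n) : bool :=
  injectiveb w &&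
  cyc_ordered ([seq w (inord k.*2) | k <- iota 0 l.+1]
               ++ [seq w (inord k.*2.+1) | k <- iota 0 l]).

Definition prev_idx (l : nat) (i : 'I_(l.*2.+1)) : 'I_(l.*2.+1) :=
  inord ((i + l.*2) %% l.*2.+1).

Definition r_valid (n l r : nat) (w : 'I_(l.*2.+1) -> 'I_n) : bool :=
  semi_valid w &&
  [forall i : 'I_(l.*2.+1), r <= #|cint (w i) (w (prev_idx i))|].

(* Main.v *)
Require Import Defs.
From mathcomp Require Import all_boot.
From mathcomp Require Import zify.

Lemma cdistE n (u v : 'I_n) : cdist u v = if u <= v then v - u else v + n - u.
Proof.
rewrite /cdist; have hu := ltn_ord u; have hv := ltn_ord v.
case: leqP => h.
  have -> : v + n - u = (v - u) + n by lia.
  by rewrite modnDr modn_small //; lia.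
by rewrite modn_small //; lia.
Qed.

Lemma key n x a b c : x < n -> a < n -> b < n -> c < n ->
  let q := fun y => if x <= y then y - x else y + n - x in
  (q a <= q c <= q b) \/ (q b < q a <= q c) \/ (q c <= q b < q a) ->
  (if a <= c then c - a else c + n - a) <= (if a <= b then b - a else b + n - a).
Proof.
move=> hx ha hb hc q; rewrite /q.
case: (leqP x a); case: (leqP x b); case: (leqP x c);
case: (leqP a b); case: (leqP a c); lia.
Qed.

Definition ps (l j : nat) := if odd j then l.+1 + j./2 else j./2.

Lemma ps_inj l j j' : ps l j = ps l j' -> j < l.*2.+1 -> j' < l.*2.+1 -> j = j'.
Proof.
rewrite /ps => e h h'.
have hj := odd_double_half j; have hj' := odd_double_half j'.
move: e hj hj'; case: (odd j); case: (odd j') => /=; lia.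
Qed.

Lemma pos_cases l i t : i < l.*2.+1 -> t <= l ->
  let p := if i == 0 then l.*2 else i.-1 in
  let g := if i + t.*2 < l.*2.+1 then i + t.*2 else i + t.*2 - l.*2.+1 in
  (ps l i <= ps l g <= ps l p) \/ (ps l p < ps l i <= ps l g) \/
  (ps l g <= ps l p < ps l i).
Proof.
move=> hi ht p g.
have hp : p = (if i == 0 then l.*2 else i.-1) by [].
have hg : g = (if i + t.*2 < l.*2.+1 then i + t.*2 else i + t.*2 - l.*2.+1) by [].
rewrite /ps.
have e1 := odd_double_half i; have e2 := odd_double_half p;
have e3 := odd_double_half g.
move: hp hg e1 e2 e3.
case: (odd i); case: (odd p); case: (odd g) => /=;
case: eqP => ?; case: ltnP => ?; lia.
Qed.

Theorem lemma3p11 (n r l : nat) (w : 'I_(l.*2.+1) -> 'I_n) :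
  2 <= r -> r.-1 <= l -> semi_valid w -> r_valid r w.
Proof.
move=> hr hl sv; rewrite /r_valid sv /=.
move: sv => /andP [/injectiveP winj cyc].
set m := l.*2.+1.
have hm : m = l.*2.+1 by [].
set s := [seq w (inord k.*2) | k <- iota 0 l.+1] ++ [seq w (inord k.*2.+1) | k <- iota 0 l].
have sz : size s = m by rewrite size_cat !size_map !size_iota; lia.
set x0 := w (inord 0).
have nths : forall j, j < m -> nth x0 s (ps l j) = w (inord j).
  move=> j hj; rewrite /ps nth_cat size_map size_iota.
  have e := odd_double_half j.
  case: (odd j) e => e; rewrite /= in e.
    rewrite ifN; last by lia.
    rewrite (nth_map 0); last by rewrite size_iota; lia.
    rewrite nth_iota; last by lia.
    by congr (w (inord _)); lia.
  rewrite ifT; last by lia.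
  rewrite (nth_map 0); last by rewrite size_iota; lia.
  rewrite nth_iota; last by lia.
  by congr (w (inord _)); lia.
have hs0 : s = x0 :: behead s.
  by rewrite /s /= /x0 -[0]/(0.*2).
have srt : sorted ltn [seq cdist x0 y | y <- s].
  by move: cyc; rewrite /cyc_ordered -/s hs0 => /andP [].
have psm : forall j, j < m -> ps l j < m.
  move=> j hj; rewrite /ps; have e := odd_double_half j.
  case: (odd j) e => /= e; lia.
have mono : forall j j', j < m -> j' < m -> ps l j < ps l j' ->
    cdist x0 (w (inord j)) < cdist x0 (w (inord j')).
  move=> j j' hj hj' hlt.
  have := sorted_ltn_nth ltn_trans 0 srt.
  move=> /(_ (ps l j) (ps l j')); rewrite !inE size_map sz !(nth_map x0) ?sz ?psm //.
  by rewrite !nths //; apply.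
have monoe : forall j j', j < m -> j' < m -> ps l j <= ps l j' ->
    cdist x0 (w (inord j)) <= cdist x0 (w (inord j')).
  move=> j j' hj hj'; rewrite leq_eqVlt => /orP [/eqP e|h].
    by rewrite (@ps_inj l j j' e hj hj').
  by apply: ltnW; apply: mono.
apply/forallP => i.
have hi := ltn_ord i.
set g := fun t : nat => if i + t.*2 < m then i + t.*2 else i + t.*2 - m.
set F := (fun t : 'I_l.+1 => w (inord (g t))) @: [set: 'I_l.+1].
have gm : forall t, t <= l -> g t < m.
  move=> t ht; rewrite /g /=; case: (ltnP (i + t.*2) m) => ?; lia.
have cardF : #|F| = l.+1.
  rewrite card_imset ?cardsT ?card_ord // => t t' /winj e.
  have : g t = g t'.
    have := congr1 (@nat_of_ord _) e; rewrite !inordK //; apply: gm; rewrite -ltnS //.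
  rewrite /g => e2; apply: val_inj; rewrite /=.
  have := ltn_ord t; have := ltn_ord t'; move: e2.
  case: (ltnP (i + t.*2) m) => ?; case: (ltnP (i + t'.*2) m) => ? /= h1 h2 h3; lia.
have pv : (prev_idx i : nat) = if (i : nat) == 0 then l.*2 else i.-1.
  rewrite /prev_idx inordK; last by apply: ltn_pmod.
  case: eqP => [->|/eqP h]; first by rewrite add0n modn_small.
  have hi0 : 0 < i by rewrite lt0n.
  have -> : i + l.*2 = i.-1 + l.*2.+1 by lia.
  by rewrite modnDr modn_small //; lia.
have sub : F \subset cint (w i) (w (prev_idx i)).
  apply/subsetP => y /imsetP [t _ ->]; rewrite inE !cdistE.
  have ht : t <= l by rewrite -ltnS.
  have hp := ltn_ord (prev_idx i).
  have hx0 : (x0 : nat) < n by apply: ltn_ord.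
  have := key _ _ _ _ _ hx0 (ltn_ord (w i)) (ltn_ord (w (prev_idx i))) (ltn_ord (w (inord (g t)))).
  apply.
  have := pos_cases _ _ _ hi ht; rewrite -pv -/m -/(g t) => PC.
  have cd : forall j : 'I_m, (if x0 <= w j then w j - x0 else w j + n - x0) = cdist x0 (w (inord (val j))).
    by move=> j; rewrite inord_val cdistE.
  rewrite (cd i) (cd (prev_idx i)) (cd (inord (g t))) /= (inordK (gm _ ht)).
  have hpm : prev_idx i < m by [].
  case: PC => [/andP[h1 h2]|[/andP[h1 h2]|/andP[h1 h2]]].
  - by left; rewrite !monoe ?gm.
  - by right; left; rewrite mono ?monoe ?gm.
  - by right; right; rewrite mono ?monoe ?gm.
apply: leq_trans (subset_leq_card sub); rewrite cardF; lia.
Qed.
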